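(* If $G$ is an infinite, connected, locally finite graph with finite metric dimension, then $G$ does not contain an infinite family of metric rays whose vertex sets are pairwise disjoint.
   Context: $d$ denotes shortest-path distance in $G$. A vertex $x$ resolves $u,v$ if $d(u,x)\ne d(v,x)$; a set $S$ of vertices is a resolving set if every pair of distinct vertices is resolved by some vertex of $S$. The metric dimension $\beta(G)$ is the minimum cardinality of a resolving set if a finite one exists, and $\infty$ otherwise. A metric ray of $G$ with endpoint $u_0$ is an infinite subgraph $P$ whose vertices admit an ordering $u_0,u_1,u_2,\dots$ (all distinct) with $u_k$ adjacent to $u_{k+1}$ in $P$ and $d_G(u_0,u_k)=k$ for all $k\ge 0$. *)

(* Defs.v *)
(* A (simple, possibly infinite) graph is a type V of vertices
   with an adjacency relation adj : V -> V -> Prop (assumed symmetric and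
   irreflexive in the theorem). *)
From Stdlib Require Import List Arith.
Import ListNotations.

Section Graph.
Variable V : Type.
Variable adj : V -> V -> Prop.

Inductive has_walk : V -> V -> nat -> Prop :=
| walk_nil : forall u, has_walk u u 0
| walk_cons : forall u w v n, adj u w -> has_walk w v n -> has_walk u v (S n).

Definition gdist (u v : V) (k : nat) : Prop :=
  has_walk u v k /\ forall m, has_walk u v m -> k <= m.

Definition connected : Prop := forall u v : V, exists n, has_walk u v n.

Definition locally_finite : Prop :=
  forall v : V, exists l : list V, forall w, adj v w -> In w l.

Definition infinite_vertex_set : Prop := ~ exists l : list V, forall v : V, In v l.

Definition resolves (x u v : V) : Prop :=
  forall k l, gdist u x k -> gdist v x l -> k <> l.

Definition resolving_set (S : list V) : Prop :=
  forall u v : V, u <> v -> exists x, In x S /\ resolves x u v.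

Definition finite_metric_dimension : Prop := exists S : list V, resolving_set S.

(* A metric ray, given by its vertex ordering u_0, u_1, ...; its vertex set
   is the image of u. *)
Definition metric_ray (u : nat -> V) : Prop :=
  (forall i j, u i = u j -> i = j) /\
  (forall k, adj (u k) (u (S k))) /\
  (forall k, gdist (u 0) (u k) k).

End Graph.

(* Main.v *)
Require Import Defs.
From Stdlib Require Import List Arith.
From Stdlib Require Import Lia ZArith Classical ClassicalEpsilon.

Lemma walk_app (V : Type) (adj : V -> V -> Prop) u w v a b :
  has_walk V adj u w a -> has_walk V adj w v b -> has_walk V adj u v (a+b).
Proof.
  intros H; revert v b; induction H; intros v' b' H2; simpl; auto.
  eapply walk_cons; eauto.
Qed.

Lemma walk_rev (V : Type) (adj : V -> V -> Prop)
  (Hsym : forall u v, adj u v -> adj v u) u v n :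
  has_walk V adj u v n -> has_walk V adj v u n.
Proof.
  induction 1. constructor.
  replace (S n) with (n + 1) by lia.
  eapply walk_app; eauto. eapply walk_cons; [apply Hsym; eauto| constructor].
Qed.

Lemma min_exists (P : nat -> Prop) n : P n -> exists m, P m /\ forall k, P k -> m <= k.
Proof.
  revert P. induction n as [n IH] using lt_wf_ind. intros P Hn.
  destruct (classic (exists k, k < n /\ P k)) as [[k [Hk Pk]]|Hno].
  - eapply IH; eauto.
  - exists n; split; auto. intros k Pk.
    destruct (le_lt_dec n k); auto. exfalso; apply Hno; eauto.
Qed.

Definition inf (P : nat -> Prop) := forall n, exists i, n <= i /\ P i.

Lemma pigeon1 M : forall (P : nat -> Prop) (g : nat -> nat), inf P ->
  (forall i, P i -> g i <= M) -> exists v, inf (fun i => P i /\ g i = v).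
Proof.
  induction M; intros P g HP Hg.
  - exists 0. intro n. destruct (HP n) as [i [Hi Pi]]. exists i.
    specialize (Hg i Pi). repeat split; auto; lia.
  - destruct (classic (inf (fun i => P i /\ g i = S M))) as [Y|N].
    + eauto.
    + unfold inf in N. apply not_all_ex_not in N. destruct N as [n0 N].
      destruct (IHM (fun i => P i /\ n0 <= i) g) as [v Hv].
      * intro n. destruct (HP (max n n0)) as [i [Hi Pi]]. exists i. split; [lia|split; auto; lia].
      * intros i [Pi Hi]. specialize (Hg i Pi).
        destruct (Nat.eq_dec (g i) (S M)); [|lia].
        exfalso; apply N; eauto.
      * exists v. intro n. destruct (Hv n) as [i [Hi [[Pi _] E]]]. eauto.
Qed.

Lemma pigeonL (V : Type) (pat : nat -> V -> Z) (B : V -> nat)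
  (HB : forall i s, (- Z.of_nat (B s) <= pat i s <= Z.of_nat (B s))%Z) :
  forall L P, inf P -> exists P', inf P' /\ (forall i, P' i -> P i) /\
    forall i j, P' i -> P' j -> forall s, In s L -> pat i s = pat j s.
Proof.
  induction L as [|s L IH]; intros P HP.
  - exists P; repeat split; auto. intros ? ? ? ? ? [].
  - destruct (IH P HP) as [P1 [H1 [H1P H1E]]].
    destruct (pigeon1 (2 * B s) P1 (fun i => Z.to_nat (pat i s + Z.of_nat (B s)))) as [v Hv]; auto.
    + intros i _. specialize (HB i s). lia.
    + exists (fun i => P1 i /\ Z.to_nat (pat i s + Z.of_nat (B s)) = v).
      repeat split; auto.
      * intros i [Hi _]; auto.
      * intros i j [Pi Ei] [Pj Ej] s' [<-|Hs'].
        -- pose proof (HB i s); pose proof (HB j s). lia.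
        -- auto.
Qed.

Theorem theorem2 (V : Type) (adj : V -> V -> Prop)
  (Hsym : forall u v, adj u v -> adj v u)
  (Hirr : forall u, ~ adj u u)
  (Hinf : infinite_vertex_set V)
  (Hconn : connected V adj)
  (Hlf : locally_finite V adj)
  (Hdim : finite_metric_dimension V adj) :
  ~ exists R : nat -> nat -> V,
      (forall i, metric_ray V adj (R i)) /\
      (forall i j, i <> j -> forall k l, R i k <> R j l).
Proof.
  intros [R [HR Hdisj]].
  assert (Hex : forall u v, exists k, gdist V adj u v k).
  { intros u v. destruct (Hconn u v) as [n Hn].
    destruct (min_exists _ n Hn) as [m [Hm Hmin]]. exists m; split; auto. }
  pose (dist := fun u v => proj1_sig (constructive_indefinite_description _ (Hex u v))).
  assert (Hd : forall u v, gdist V adj u v (dist u v)).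
  { intros u v. unfold dist. destruct constructive_indefinite_description; auto. }
  assert (Huniq : forall u v k, gdist V adj u v k -> dist u v = k).
  { intros u v k [H1 H2]. destruct (Hd u v) as [H3 H4].
    specialize (H2 _ H3). specialize (H4 _ H1). lia. }
  assert (Hle : forall u v n, has_walk V adj u v n -> dist u v <= n).
  { intros. apply (Hd u v); auto. }
  assert (Htri : forall u w v, dist u v <= dist u w + dist w v).
  { intros. apply Hle. eapply walk_app; apply Hd. }
  assert (Hsy : forall u v, dist u v = dist v u).
  { intros. apply Nat.le_antisymm; apply Hle; apply walk_rev; auto; apply Hd. }
  assert (Hadj : forall u v, adj u v -> dist u v <= 1).
  { intros. apply Hle. eapply walk_cons; eauto. constructor. }
  assert (Hc : forall i s, exists c : Z, exists K, forall k, K <= k ->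
             (Z.of_nat (dist (R i k) s) - Z.of_nat k = c)%Z).
  { intros i s. destruct (HR i) as [_ [Ha Hg]].
    assert (H0 : forall k, dist (R i 0) (R i k) = k) by (intro k; apply Huniq; auto).
    pose (g := fun k => dist (R i k) s + dist (R i 0) s - k).
    assert (Hge : forall k, k <= dist (R i k) s + dist (R i 0) s).
    { intro k. rewrite <- (H0 k) at 1. rewrite (Hsy (R i k) s).
      pose proof (Htri (R i 0) s (R i k)). lia. }
    assert (Hmon : forall k, g (S k) <= g k).
    { intro k. unfold g. pose proof (Htri (R i (S k)) (R i k) s).
      pose proof (Hadj _ _ (Hsym _ _ (Ha k))). pose proof (Hge k). pose proof (Hge (S k)). lia. }
    assert (Hmon2 : forall K k, K <= k -> g k <= g K).
    { intros K k Hk. induction Hk; auto. pose proof (Hmon m). lia. }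
    destruct (min_exists (fun v => exists k, g k = v) (g 0%nat) (ex_intro _ 0%nat eq_refl))
      as [v [[K HK] Hmin]].
    exists (Z.of_nat v - Z.of_nat (dist (R i 0%nat) s))%Z, K. intros k Hk.
    assert (g k = v). { pose proof (Hmon2 K k Hk). assert (v <= g k) by eauto. lia. }
    unfold g in H. pose proof (Hge k). lia. }
  pose (C := fun i s => proj1_sig (constructive_indefinite_description _ (Hc i s))).
  assert (HC : forall i s, exists K, forall k, K <= k ->
             (Z.of_nat (dist (R i k) s) - Z.of_nat k = C i s)%Z).
  { intros i s. unfold C. destruct constructive_indefinite_description; auto. }
  pose (KK := fun i s => proj1_sig (constructive_indefinite_description _ (HC i s))).
  assert (HK : forall i s k, KK i s <= k ->
             (Z.of_nat (dist (R i k) s) - Z.of_nat k = C i s)%Z).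
  { intros i s. unfold KK. destruct constructive_indefinite_description; auto. }
  set (s0 := R 0 0).
  pose (pat := fun i s => (C i s - C i s0)%Z).
  destruct Hdim as [Sl HS].
  destruct (pigeonL V pat (fun s => dist s0 s)) with (L := Sl) (P := fun _ : nat => True)
    as [P' [Hinf' [_ HE]]].
  { intros i s. unfold pat.
    pose proof (HK i s (KK i s + KK i s0) ltac:(lia)).
    pose proof (HK i s0 (KK i s + KK i s0) ltac:(lia)).
    pose proof (Htri (R i (KK i s + KK i s0)) s0 s).
    pose proof (Htri (R i (KK i s + KK i s0)) s s0).
    pose proof (Hsy s s0). lia. }
  { intro n; exists n; auto. }
  destruct (Hinf' 0) as [i [_ Pi]].
  destruct (Hinf' (S i)) as [j [Hj Pj]].
  pose (Kall := list_max (map (fun s => KK i s + KK j s) Sl)).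
  assert (HKall : forall s, In s Sl -> KK i s + KK j s <= Kall).
  { intros s Hs. unfold Kall. pose proof (proj1 (list_max_le (map (fun s => KK i s + KK j s) Sl) (list_max (map (fun s => KK i s + KK j s) Sl))) (le_n _)) as F.
    rewrite Forall_forall in F. apply F. apply in_map_iff. eauto. }
  set (delta := (C i s0 - C j s0)%Z).
  set (k := Kall + Z.to_nat (Z.abs delta)).
  set (l := Z.to_nat (Z.of_nat k + delta)).
  assert (Hneq : R i k <> R j l) by (apply Hdisj; lia).
  destruct (HS _ _ Hneq) as [s [Hs Hres]].
  apply (Hres (dist (R i k) s) (dist (R j l) s)); auto.
  pose proof (HKall s Hs).
  pose proof (HK i s k ltac:(unfold k; lia)).
  pose proof (HK j s l ltac:(unfold l, k; lia)).
  pose proof (HE i j Pi Pj s Hs). unfold pat in *.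
  assert (Z.of_nat l = Z.of_nat k + delta)%Z by (unfold l, k; lia).
  lia.
Qed.
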